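(* Let $\Gamma\subset\mathbb{F}_q[x]^2$ be an $\mathbb{F}_q[x]$-lattice of rank $2$ with $\mathrm{vol}(\Gamma)=q^m$, and let $r,s\ge0$ be integers. Then the number of vectors $v=(g,h)\in\Gamma$ that are primitive in $\Gamma$ and satisfy $\deg g\le r$, $\deg h\le s$ is at most $\max(q,q^{r+s-m+2})$.
   Context: An $\mathbb{F}_q[x]$-lattice of rank $n$ is an $\mathbb{F}_q[x]$-submodule $\Gamma\subset\mathbb{F}_q[x]^n$ of finite index; $\mathrm{vol}(\Gamma)=[\mathbb{F}_q[x]^n:\Gamma]$. Degrees of polynomials use $\deg0=-\infty$. $v\in\Gamma$ is primitive in $\Gamma$ if $v$ cannot be written as $v=aw$ with $w\in\Gamma$ and $a\in\mathbb{F}_q[x]$, $\deg a\ge1$. *)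

(* Defs.v *)
From HB Require Import structures.
From mathcomp Require Import all_boot all_order all_algebra.
Set Implicit Arguments. Unset Strict Implicit. Unset Printing Implicit Defensive.
Import Order.TTheory GRing.Theory Num.Theory.
Local Open Scope ring_scope.

Section Lattices.
Variable F : finFieldType.

Definition vec2 := ({poly F} * {poly F})%type.

Definition vadd (v w : vec2) : vec2 := (v.1 + w.1, v.2 + w.2).
Definition vsub (v w : vec2) : vec2 := (v.1 - w.1, v.2 - w.2).
Definition vscale (a : {poly F}) (v : vec2) : vec2 := (a * v.1, a * v.2).

Definition is_submodule (G : vec2 -> Prop) : Prop :=
  [/\ G (0, 0),
      (forall v w, G v -> G w -> G (vadd v w)) &
      (forall a v, G v -> G (vscale a v))].

(* [F[x]^2 : G] = N : there are exactly N cosets of G in F[x]^2,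
   witnessed by a complete, irredundant system of N representatives. *)
Definition has_index (G : vec2 -> Prop) (N : nat) : Prop :=
  exists s : seq vec2,
    [/\ size s = N,
        (forall v, exists i, (i < N)%N /\ G (vsub v (nth (0, 0) s i))) &
        (forall i j, (i < N)%N -> (j < N)%N ->
           G (vsub (nth (0, 0) s i) (nth (0, 0) s j)) -> i = j)].

(* an F[x]-lattice of rank 2 with volume N *)
Definition lattice2_vol (G : vec2 -> Prop) (N : nat) : Prop :=
  is_submodule G /\ has_index G N.

Definition primitive (G : vec2 -> Prop) (v : vec2) : Prop :=
  G v /\ ~ (exists (a : {poly F}) (w : vec2),
             G w /\ (1 < size a)%N /\ v = vscale a w).

End Lattices.

(* Main.v *)
Require Import Defs.
From mathcomp Require Import all_boot all_order all_algebra.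
From mathcomp Require Import zify ring.
From Stdlib Require Import Classical.
Import Order.TTheory GRing.Theory Num.Theory.
Local Open Scope ring_scope.
Set Implicit Arguments. Unset Strict Implicit.

Lemma p_shift (F : finFieldType) (P : {poly F}) (n j : nat) (c : F) :
  (size P <= n)%N -> (size ('X^j * (c%:P * P))%R <= n + j)%N /\
  ((0 < n)%N -> ('X^j * (c%:P * P))`_(n + j).-1 = c * P`_n.-1).
Proof.
move=> hP; split.
  apply/leq_sizeP => i hi; rewrite coefXnM coefCM.
  case: ifP => // hij; move/leq_sizeP: hP => ->; first by rewrite mulr0.
  lia.
case: n hP => // n hP _.
rewrite coefXnM coefCM.
have -> : ((n.+1 + j).-1 < j)%N = false by lia.
by have -> : ((n.+1 + j).-1 - j)%N = n by lia.
Qed.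

Lemma p_drop (F : finFieldType) (P : {poly F}) (n : nat) :
  (size P <= n)%N -> P`_n.-1 = 0 -> (size P <= n.-1)%N.
Proof.
move=> /leq_sizeP hP h0; apply/leq_sizeP => i hi.
have [->|hne] := eqVneq i n.-1; first by [].
apply: hP; lia.
Qed.

Definition Lv (F : finFieldType) (r s n : nat) (v : vec2 F) :=
  (size ('X^s * v.1)%R <= n)%N && (size ('X^r * v.2)%R <= n)%N.
Definition top (F : finFieldType) (r s n : nat) (v : vec2 F) : F * F :=
  (('X^s * v.1)`_n.-1, ('X^r * v.2)`_n.-1).

Lemma Lv_add (F : finFieldType) r s n (v w : vec2 F) :
  Lv r s n v -> Lv r s n w -> Lv r s n (vadd v w) /\
  top r s n (vadd v w) = ((top r s n v).1 + (top r s n w).1, (top r s n v).2 + (top r s n w).2).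
Proof.
case/andP=> h1 h2 /andP[h3 h4]; rewrite /Lv /top /vadd /= !mulrDr !coefD; split => //.
by apply/andP; split; apply: leq_trans (size_polyD _ _) _; rewrite geq_max; apply/andP.
Qed.

Lemma Lv_sub (F : finFieldType) r s n (v w : vec2 F) :
  Lv r s n v -> Lv r s n w -> Lv r s n (vsub v w) /\
  top r s n (vsub v w) = ((top r s n v).1 - (top r s n w).1, (top r s n v).2 - (top r s n w).2).
Proof.
case/andP=> h1 h2 /andP[h3 h4]; rewrite /Lv /top /vsub /= !mulrBr !coefB; split => //.
by apply/andP; split; apply: leq_trans (size_polyD _ _) _; rewrite size_polyN geq_max; apply/andP.
Qed.

Lemma Lv_scale (F : finFieldType) r s n k (c : F) (v : vec2 F) :
  Lv r s n v -> (0 < n)%N -> (n <= k)%N ->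
  Lv r s k (vscale (c%:P * 'X^(k - n)) v) /\
  top r s k (vscale (c%:P * 'X^(k - n)) v) = (c * (top r s n v).1, c * (top r s n v).2).
Proof.
case/andP=> h1 h2 n0 nk; rewrite /Lv /top /vscale /=.
have e1 : forall t (p : {poly F}), 'X^t * (c%:P * 'X^(k - n) * p) = 'X^(k - n) * (c%:P * ('X^t * p)).
  by move=> t p; ring.
rewrite !e1; have [a1 b1] := p_shift (k - n) c h1; have [a2 b2] := p_shift (k - n) c h2.
have ek : (n + (k - n))%N = k by lia.
rewrite ek in a1 a2 b1 b2; rewrite a1 a2 b1 ?b2 //.
Qed.

Lemma Lv_drop (F : finFieldType) r s n (v : vec2 F) :
  Lv r s n v -> top r s n v = (0, 0) -> Lv r s n.-1 v.
Proof.
case/andP=> h1 h2 [e1 e2]; apply/andP; split; exact: p_drop.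
Qed.

Lemma Lv0 (F : finFieldType) r s (v : vec2 F) : Lv r s 0 v -> v = (0, 0).
Proof.
case/andP; rewrite !size_poly_leq0 !mulf_eq0 !expf_eq0 polyX_eq0 !andbF /= => /eqP a /eqP b.
by case: v a b => /= ? ? -> ->.
Qed.

Lemma Lv_mono (F : finFieldType) r s n k (v : vec2 F) : Lv r s n v -> (n <= k)%N -> Lv r s k v.
Proof. by case/andP=> h1 h2 nk; apply/andP; split; apply: leq_trans nk. Qed.

Lemma Lv_ex (F : finFieldType) r s (v : vec2 F) : exists n, Lv r s n v.
Proof.
exists (size ('X^s * v.1)%R + size ('X^r * v.2)%R)%N; apply/andP; split; lia.
Qed.

Lemma Lv_box (F : finFieldType) r s (v : vec2 F) :
  Lv r s (r + s + 1) v = (size v.1 <= r.+1)%N && (size v.2 <= s.+1)%N.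
Proof.
rewrite /Lv; congr andb; apply/idP/idP.
- move/leq_sizeP=> h; apply/leq_sizeP => i hi.
  have := h (i + s)%N; rewrite coefXnM.
  have -> : (i + s < s)%N = false by lia.
  rewrite addnK; apply; lia.
- move=> h; apply: leq_trans (size_polyMleq _ _) _; rewrite size_polyXn; lia.
- move/leq_sizeP=> h; apply/leq_sizeP => i hi.
  have := h (i + r)%N; rewrite coefXnM.
  have -> : (i + r < r)%N = false by lia.
  rewrite addnK; apply; lia.
- move=> h; apply: leq_trans (size_polyMleq _ _) _; rewrite size_polyXn; lia.
Qed.

Definition det (F : finFieldType) (v w : vec2 F) := v.1 * w.2 - v.2 * w.1.

Lemma G_add (F : finFieldType) (G : vec2 F -> Prop) v w :
  is_submodule G -> G v -> G w -> G (vadd v w).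
Proof. by case=> _ h _; apply: h. Qed.

Lemma G_scale (F : finFieldType) (G : vec2 F -> Prop) a v :
  is_submodule G -> G v -> G (vscale a v).
Proof. by case=> _ _ h; apply: h. Qed.

Lemma G_sub (F : finFieldType) (G : vec2 F -> Prop) v w :
  is_submodule G -> G v -> G w -> G (vsub v w).
Proof.
move=> hG hv hw; have := G_add hG hv (G_scale (-1) hG hw).
by rewrite /vadd /vscale /vsub /= !mulN1r.
Qed.

Lemma min_ex (P : nat -> Prop) n : P n -> exists m, P m /\ forall k, (k < m)%N -> ~ P k.
Proof.
elim: n {-2}n (leqnn n) => [|N IH] n hn hP.
  exists n; split => // k hk; lia.
case: (classic (exists k, (k < n)%N /\ P k)) => [[k [hk Pk]]|hno].
  by apply: (IH k) => //; lia.
by exists n; split => // k hk Pk; apply: hno; exists k.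
Qed.

Lemma prop_c (F : fieldType) (a b : F * F) :
  a != (0, 0) -> a.1 * b.2 - a.2 * b.1 = 0 -> exists c, b = (c * a.1, c * a.2).
Proof.
case: a b => a1 a2 [b1 b2] /= ha hd.
case: (eqVneq a1 0) => h1.
  have h2 : a2 != 0 by move: ha; rewrite h1; apply: contraNneq => ->.
  exists (b2 / a2); rewrite h1 mulr0 divfK //.
  have : a2 * b1 = 0 by rewrite h1 mul0r sub0r in hd; apply/eqP; rewrite -oppr_eq0 hd.
  by move/eqP; rewrite mulf_eq0 (negbTE h2) /= => /eqP ->.
exists (b1 / a1); rewrite divfK //; congr pair.
apply: (mulIf h1); rewrite mulrAC divfK //; apply/eqP; rewrite -subr_eq0 [b2 * _]mulrC [b1 * _]mulrC hd //.
Qed.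

Arguments top : simpl never.

Lemma solve2 (F : fieldType) (a1 a2 b1 b2 : F) c1 c2 : a1 * b2 - a2 * b1 != 0 ->
  c1 - ((c1 * b2 - c2 * b1) / (a1 * b2 - a2 * b1) * a1 + (a1 * c2 - a2 * c1) / (a1 * b2 - a2 * b1) * b1) = 0 /\ c2 - ((c1 * b2 - c2 * b1) / (a1 * b2 - a2 * b1) * a2 + (a1 * c2 - a2 * c1) / (a1 * b2 - a2 * b1) * b2) = 0.
Proof. by move=> h; split; field. Qed.

Lemma reduction (F : finFieldType) (G : vec2 F -> Prop) r s v w :
  is_submodule G -> G v -> G w -> Lv r s (r + s + 1) v -> Lv r s (r + s + 1) w ->
  det v w != 0 ->
  forall u, exists b, Lv r s (r + s + 1) b /\ G (vsub u b).
Proof.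
move=> hG Gv Gw Bv Bw dvw.
have v0 : v != (0, 0) by apply: contraNneq dvw => ->; rewrite /det /= !mul0r subr0.
have [n1 [[v1 [Gv1 [v10 L1]]] min1]] :=
  @min_ex (fun n => exists v1, G v1 /\ v1 != (0,0) /\ Lv r s n v1) _ (ex_intro _ v (conj Gv (conj v0 Bv))).
have n1pos : (0 < n1)%N.
  case: n1 L1 min1 => // L1 _; by move: v10; rewrite (Lv0 L1) eqxx.
have Qex : exists v2, G v2 /\ det v1 v2 != 0 /\ Lv r s (r + s + 1) v2.
  case: (eqVneq (det v1 v) 0) => hv; last by exists v; split.
  case: (eqVneq (det v1 w) 0) => hw; last by exists w; split.
  exfalso; move/eqP: dvw; apply.
  have e1 : v1.1 * det v w = v.1 * det v1 w - w.1 * det v1 v by rewrite /det; ring.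
  have e2 : v1.2 * det v w = v.2 * det v1 w - w.2 * det v1 v by rewrite /det; ring.
  rewrite hv hw !mulr0 subr0 in e1 e2; move/eqP: e1; move/eqP: e2.
  rewrite !mulf_eq0; case: v1 v10 {Gv1 L1 min1 hv hw} => a b v10 /=.
  case/orP => [/eqP hb|/eqP //]; case/orP => [/eqP ha|/eqP //].
  by move: v10; rewrite ha hb eqxx.
have [n2 [[v2 [Gv2 [d12 L2]]] min2]] :=
  @min_ex (fun n => exists v2, G v2 /\ det v1 v2 != 0 /\ Lv r s n v2) _ Qex.
have n2le : (n2 <= r + s + 1)%N.
  rewrite leqNgt; apply/negP => h; case: Qex => x [? [? ?]]; apply: (min2 _ h); by exists x.
have n12 : (n1 <= n2)%N.
  rewrite leqNgt; apply/negP => h; apply: (min1 _ h); exists v2; split => //; split => //.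
  by apply: contraNneq d12 => ->; rewrite /det /= !mulr0 subrr.
pose t1 := top r s n1 v1; pose t2 := top r s n2 v2.
have t10 : t1 != (0, 0).
  apply/eqP => h; apply: (min1 n1.-1); first lia.
  by exists v1; split => //; split => //; apply: Lv_drop.
have key : t1.1 * t2.2 - t1.2 * t2.1 != 0.
  apply/negP => /eqP hd.
  have [c hc] := prop_c t10 hd.
  have [L2' T2'] := Lv_scale c L1 n1pos n12.
  have [L3 T3] := Lv_sub L2 L2'.
  apply: (min2 n2.-1); first lia.
  exists (vsub v2 (vscale (c%:P * 'X^(n2 - n1)) v1)); split.
    by apply: G_sub => //; apply: G_scale.
  split; last first.
    apply: Lv_drop => //; rewrite T3 T2' -/t2 hc /=.
    by rewrite !subrr.
  suff -> : det v1 (vsub v2 (vscale (c%:P * 'X^(n2 - n1)) v1)) = det v1 v2 by [].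
  by rewrite /det /vsub /vscale /=; ring.
move=> u; have [k Lu] := Lv_ex r s u.
elim: k u Lu => [|k IH] u Lu.
  by exists u; split; [apply: Lv_mono Lu _|rewrite /vsub subrr subrr; case: hG].
case: (leqP k.+1 (r + s + 1)) => hk.
  by exists u; split; [apply: Lv_mono Lu _|rewrite /vsub subrr subrr; case: hG].
pose t := top r s k.+1 u; pose dd := t1.1 * t2.2 - t1.2 * t2.1.
pose al := (t.1 * t2.2 - t.2 * t2.1) / dd; pose be := (t1.1 * t.2 - t1.2 * t.1) / dd.
have hk1 : (n1 <= k.+1)%N by lia.
have hk2 : (n2 <= k.+1)%N by lia.
have [La Ta] := Lv_scale al L1 n1pos hk1.
have [Lb Tb] := Lv_scale be L2 (leq_trans n1pos n12) hk2.
set ga := vadd (vscale (al%:P * 'X^(k.+1 - n1)) v1) (vscale (be%:P * 'X^(k.+1 - n2)) v2).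
have [Lg Tg] := Lv_add La Lb.
have [Lu' Tu'] := Lv_sub Lu Lg.
have Gga : G ga by apply: G_add => //; apply: G_scale.
have T0 : top r s k.+1 (vsub u ga) = (0, 0).
  rewrite Tu' Tg Ta Tb -/t1 -/t2 -/t /=.
  by rewrite /al /be /dd; case: (solve2 t.1 t.2 key) => -> ->.
have [b [Bb Gb]] := IH _ (Lv_drop Lu' T0).
exists b; split => //.
have -> : vsub u b = vadd (vsub (vsub u ga) b) ga.
  by rewrite /vsub /vadd /=; congr pair; ring.
by apply: G_add.
Qed.

Definition code (F : finFieldType) r s (v : vec2 F) :
  ({ffun 'I_r.+1 -> F} * {ffun 'I_s.+1 -> F})%type :=
  ([ffun i : 'I_r.+1 => v.1`_i], [ffun i : 'I_s.+1 => v.2`_i]).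

Lemma poly_eq_small (F : finFieldType) n (p q : {poly F}) :
  (size p <= n)%N -> (size q <= n)%N -> (forall i : 'I_n, p`_i = q`_i) -> p = q.
Proof.
move=> /leq_sizeP hp /leq_sizeP hq h; apply/polyP => i.
case: (ltnP i n) => hi; first exact: (h (Ordinal hi)).
by rewrite hp // hq.
Qed.

Lemma code_inj (F : finFieldType) r s (a b : vec2 F) :
  Lv r s (r + s + 1) a -> Lv r s (r + s + 1) b -> code r s a = code r s b -> a = b.
Proof.
rewrite !Lv_box => /andP[a1 a2] /andP[b1 b2] [e1 e2].
case: a b a1 a2 b1 b2 e1 e2 => a1 a2 [b1 b2] /= ha1 ha2 hb1 hb2 e1 e2; congr pair.
  by apply: (poly_eq_small ha1 hb1) => i; move/ffunP: e1 => /(_ i); rewrite !ffunE.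
by apply: (poly_eq_small ha2 hb2) => i; move/ffunP: e2 => /(_ i); rewrite !ffunE.
Qed.

Lemma choose_bs (F : finFieldType) (G : vec2 F -> Prop) r s (reps : seq (vec2 F)) :
  (forall u, exists b, Lv r s (r + s + 1) b /\ G (vsub u b)) ->
  exists bs, size bs = size reps /\ forall i, (i < size reps)%N ->
     Lv r s (r + s + 1) (nth (0, 0) bs i) /\ G (vsub (nth (0, 0) reps i) (nth (0, 0) bs i)).
Proof.
move=> hsur; elim: reps => [|x reps [bs [hs hb]]]; first by exists [::].
have [b [Lb Gb]] := hsur x.
exists (b :: bs); split; first by rewrite /= hs.
by case=> [|i] //= hi; apply: hb.
Qed.

Lemma count_box (F : finFieldType) (G : vec2 F -> Prop) r s Q (reps S : seq (vec2 F)) :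
  is_submodule G -> size reps = Q ->
  (forall i j, (i < Q)%N -> (j < Q)%N ->
     G (vsub (nth (0, 0) reps i) (nth (0, 0) reps j)) -> i = j) ->
  (forall u, exists b, Lv r s (r + s + 1) b /\ G (vsub u b)) ->
  uniq S -> (forall v, v \in S -> G v /\ Lv r s (r + s + 1) v) ->
  (size S * Q <= #|F| ^ r.+1 * #|F| ^ s.+1)%N.
Proof.
move=> hG hQ hdist hsur uS hS.
have [bs [hbs hb]] := choose_bs reps hsur.
rewrite hQ in hb.
pose T := [seq code r s (vadd v (nth (0, 0) bs i)) | v <- S, i <- iota 0 Q].
have uT : uniq T.
  apply: allpairs_uniq => //; first exact: iota_uniq.
  move=> [v i] [v' j] /allpairsP [[x y] [hx hy [-> ->]]] /allpairsP [[x' y'] [hx' hy' [-> ->]]] /=.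
  rewrite !mem_iota /= in hy hy'.
  have [Gx Lx] := hS _ hx; have [Gx' Lx'] := hS _ hx'.
  have [Lby Gby] := hb y hy; have [Lby' Gby'] := hb y' hy'.
  move=> /code_inj e.
  have := e (Lv_add Lx Lby).1 (Lv_add Lx' Lby').1; clear e.
  case: x x' y y' {hx hx' Lx Lx'} Gx Gx' hy hy' Lby Gby Lby' Gby' => [x1 x2] [x1' x2'] y y' Gx Gx' hy hy' Lby Gby Lby' Gby'.
  rewrite /vadd /= => -[e1 e2].
  have Gd : G (vsub (nth (0, 0) bs y) (nth (0, 0) bs y')).
    have -> : vsub (nth (0, 0) bs y) (nth (0, 0) bs y') = vsub (x1', x2') (x1, x2).
      rewrite /vsub /=; congr pair.
        by apply: (addrI x1); rewrite addrA e1; ring.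
      by apply: (addrI x2); rewrite addrA e2; ring.
    by apply: G_sub.
  have eyy : y = y'.
    apply: hdist; [lia|lia|].
    have -> : vsub (nth (0, 0) reps y) (nth (0, 0) reps y') =
      vadd (vsub (vsub (nth (0, 0) reps y) (nth (0, 0) bs y)) (vsub (nth (0, 0) reps y') (nth (0, 0) bs y')))
           (vsub (nth (0, 0) bs y) (nth (0, 0) bs y')).
      by rewrite /vsub /vadd /=; congr pair; ring.
    by apply: G_add => //; apply: G_sub.
  subst y'; congr pair; congr pair; [exact: (addIr _ e1) | exact: (addIr _ e2)].
have := max_card (mem T).
rewrite (card_uniqP uT) size_allpairs size_iota card_prod !card_ffun !card_ord.
by [].
Qed.

Lemma prim_nz (F : finFieldType) (G : vec2 F -> Prop) v :
  is_submodule G -> primitive G v -> v != (0, 0).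
Proof.
case=> G0 _ _ [_ hn]; apply/eqP => e; apply: hn; exists 'X, (0, 0); split => //.
by rewrite size_polyX; split => //; rewrite e /vscale /= mulr0.
Qed.

Lemma prim_const (F : finFieldType) (G : vec2 F -> Prop) v a z :
  primitive G v -> G z -> v = vscale a z -> a = (a`_0)%:P.
Proof.
case=> _ hn Gz e; apply: size1_polyC; rewrite leqNgt; apply/negP => h.
by apply: hn; exists a, z.
Qed.

Lemma prim_prop (F : finFieldType) (G : vec2 F -> Prop) v w :
  is_submodule G -> primitive G v -> primitive G w -> det w v = 0 ->
  exists c : F, v = vscale c%:P w.
Proof.
move=> hG pv pw hd.
have w0 := prim_nz hG pw.
have [a [b [a0 [e1 e2]]]] : exists a b, a != 0 /\ a * v.1 = b * w.1 /\ a * v.2 = b * w.2.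
  move: hd w0; rewrite /det; case: v w {pv pw} => v1 v2 [w1 w2] /= /eqP; rewrite subr_eq0 => /eqP hd w0.
  case: (eqVneq w1 0) => h1.
    exists w2, v2; split; first by move: w0; rewrite h1; apply: contraNneq => ->.
    by split; [rewrite -hd mulrC | rewrite mulrC].
  exists w1, v1; split => //; split; first by rewrite mulrC.
  by rewrite hd mulrC.
pose d := gcdp a b.
have d0 : d != 0 by rewrite gcdp_eq0 negb_and a0.
pose a' := a %/ d; pose b' := b %/ d.
have ea : a = a' * d by rewrite divpK // dvdp_gcdl.
have eb : b = b' * d by rewrite divpK // dvdp_gcdr.
have cop : coprimep a' b' by apply: coprimep_div_gcd; rewrite a0.
have f1 : a' * v.1 = b' * w.1.
  by apply: (mulIf d0); rewrite mulrAC -ea e1 eb mulrAC.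
have f2 : a' * v.2 = b' * w.2.
  by apply: (mulIf d0); rewrite mulrAC -ea e2 eb mulrAC.
have [u hu] := Bezout_coprimepP _ _ cop.
have /size_poly1P [e e0 he] : size (u.1 * a' + u.2 * b') == 1%N.
  by rewrite size_poly_eq1.
pose z : vec2 F := vscale (e^-1)%:P (vadd (vscale u.1 w) (vscale u.2 v)).
have Gz : G z.
  by apply: G_scale => //; apply: G_add => //; apply: G_scale => //; [case: pw|case: pv].
have inv : (e^-1)%:P * e%:P = 1 :> {poly F} by rewrite -polyCM mulVf.
have kb : forall (x y : {poly F}), a' * x = b' * y -> b' * ((e^-1)%:P * (u.1 * y + u.2 * x)) = x.
  move=> x y hxy.
  have -> : b' * ((e^-1)%:P * (u.1 * y + u.2 * x)) = (e^-1)%:P * (u.1 * (b' * y) + u.2 * b' * x) by ring.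
  have hh : u.1 * (a' * x) + u.2 * b' * x = (u.1 * a' + u.2 * b') * x by ring.
  by rewrite -hxy hh he mulrA inv mul1r.
have ka : forall (x y : {poly F}), a' * x = b' * y -> a' * ((e^-1)%:P * (u.1 * y + u.2 * x)) = y.
  move=> x y hxy.
  have -> : a' * ((e^-1)%:P * (u.1 * y + u.2 * x)) = (e^-1)%:P * (u.1 * a' * y + u.2 * (a' * x)) by ring.
  have hh : u.1 * a' * y + u.2 * (b' * y) = (u.1 * a' + u.2 * b') * y by ring.
  by rewrite hxy hh he mulrA inv mul1r.
have ev : v = vscale b' z.
  by rewrite /z /vscale /vadd /=; rewrite !kb //; case: (v).
have ew : w = vscale a' z.
  by rewrite /z /vscale /vadd /=; rewrite !ka //; case: (w).
have cb := prim_const pv Gz ev; have ca := prim_const pw Gz ew.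
have a'0 : a'`_0 != 0.
  apply: contraNneq a0 => h; by rewrite ea ca h mul0r.
exists (b'`_0 / a'`_0).
rewrite ev ew /vscale /= cb ca !mulrA -!polyCM.
by rewrite !coefC /= divfK.
Qed.
Unset Implicit Arguments. Set Strict Implicit.

Theorem mainTheorem9 (F : finFieldType) (G : vec2 F -> Prop) (m r s : nat) :
  lattice2_vol G (#|F| ^ m)%N ->
  forall S : seq (vec2 F),
    uniq S ->
    (forall v, v \in S ->
       [/\ primitive G v, (size v.1 <= r.+1)%N & (size v.2 <= s.+1)%N]) ->
    ((size S)%:R : rat) <=
      Num.max (#|F|%:R : rat) ((#|F|%:R : rat) ^ ((r + s + 2)%:Z - m%:Z)).
Proof.
move=> [hG [reps [hsz hcov hdist]]] S uS hS.
have hS' : forall v, v \in S -> G v /\ Lv r s (r + s + 1) v.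
  by move=> v /hS [[Gv _] h1 h2]; split => //; rewrite Lv_box h1 h2.
have q0 : (0 < #|F|)%N by apply/card_gt0P; exists 0.
have q0' : (#|F|%:R : rat) != 0 by rewrite pnatr_eq0 -lt0n.
case: (classic (exists v w, v \in S /\ w \in S /\ det v w != 0)) => [[v [w [vS [wS dvw]]]]|hno].
  have [Gv Bv] := hS' v vS; have [Gw Bw] := hS' w wS.
  have hsur := reduction hG Gv Gw Bv Bw dvw.
  have hc := count_box hG hsz hdist hsur uS hS'.
  rewrite le_max; apply/orP; right.
  rewrite expfzDr // -exprnN -!exprnP.
  rewrite ler_pdivlMr; last by rewrite exprn_gt0 // ltr0n.
  rewrite -!natrX -natrM ler_nat.
  by apply: leq_trans hc _; rewrite -expnD; apply: leq_pexp2l => //; lia.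
rewrite le_max; apply/orP; left.
case: S uS hS hS' hno => [|v0 S'] uS hS hS' hno; first by rewrite ler0n.
have pv0 : primitive G v0 by case: (hS v0 (mem_head _ _)).
rewrite ler_nat.
have -> : #|F| = size [seq vscale c%:P v0 | c <- enum F] by rewrite size_map -cardE.
apply: uniq_leq_size => // x xS.
have [px _ _] := hS x xS.
have hd : det v0 x = 0.
  apply/eqP; apply/negPn/negP => h; apply: hno; exists v0, x; split => //; first exact: mem_head.
have [c ->] := prim_prop hG px pv0 hd.
by apply: map_f; rewrite mem_enum.
Qed.
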